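(* Let $AP=\{p\}$ and let $L_2$ be the set of Kripke trees $\mathcal{T}$ over $AP$ for which there is an infinite path $\pi$ from the root such that $p$ holds at no node of $\pi$ and, for every $i\ge0$, the node $\pi(2i)$ has a child at which $p$ holds. Then there is no CCTL$^*$ formula $\varphi$ over $AP$ with $\mathcal{L}(\varphi)=L_2$.
   Context: A Kripke tree over $AP$ is a non-blocking tree (nonempty prefix-closed set of words over some set of directions with root $\varepsilon$, every node having a child $w\cdot d$) with a labelling of nodes by subsets of $AP$; an infinite path from the root is a sequence $\pi(0)=\varepsilon,\pi(1),\dots$ with each $\pi(k+1)$ a child of $\pi(k)$. CCTL$^*$: state formulas $\varphi::=\top\mid p\mid\neg\varphi\mid\varphi\wedge\varphi\mid\mathsf{E}\psi\mid\mathsf{D}^k\varphi$ ($k\ge1$), path formulas $\psi::=\varphi\mid\neg\psi\mid\psi\wedge\psi\mid\mathsf{X}\psi\mid\psi\mathsf{U}\psi$, with $(\mathcal{T},w)\models\mathsf{E}\psi$ iff some infinite path starting at $w$ satisfies $\psi$ at position $0$, $(\mathcal{T},w)\models\mathsf{D}^k\varphi$ iff at least $k$ distinct children of $w$ satisfy $\varphi$, $(\mathcal{T},\pi,i)\models\varphi$ iff $(\mathcal{T},\pi(i))\models\varphi$ for state formulas, and standard semantics of $\mathsf{X}$, $\mathsf{U}$ and Boolean connectives. $\mathcal{L}(\varphi)$ is the set of Kripke trees $\mathcal{T}$ with $(\mathcal{T},\varepsilon)\models\varphi$. *)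

(* Defs.v *)
From Stdlib Require Import List Arith.
Import ListNotations.

(* A Kripke tree over atomic propositions AP with directions in D:
   a nonempty prefix-closed non-blocking set of words over D (root = nil,
   the children of w are the w ++ [d]), with a labelling of nodes by
   subsets of AP (lab w a  <->  a is in the label of w). *)
Record ktree (D AP : Type) : Type := KTree {
  node : list D -> Prop;
  lab : list D -> AP -> Prop;
  node_root : node [];
  node_prefix : forall u v, node (u ++ v) -> node u;
  node_nonblocking : forall w, node w -> exists d, node (w ++ [d])
}.
Arguments node {D AP} _ _.
Arguments lab {D AP} _ _ _.

Definition is_path {D AP} (T : ktree D AP) (w : list D) (pi : nat -> list D) : Prop :=
  pi 0 = w /\ forall k, node T (pi (S k)) /\ exists d, pi (S k) = pi k ++ [d].

Inductive sform (AP : Type) : Type :=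
| STrue : sform AP
| SAtom : AP -> sform AP
| SNot : sform AP -> sform AP
| SAnd : sform AP -> sform AP -> sform AP
| SE : pform AP -> sform AP
| SD : nat -> sform AP -> sform AP        (* D^k phi, well-formed only for k >= 1 *)
with pform (AP : Type) : Type :=
| PState : sform AP -> pform AP
| PNot : pform AP -> pform AP
| PAnd : pform AP -> pform AP -> pform AP
| PX : pform AP -> pform AP
| PU : pform AP -> pform AP -> pform AP.
Arguments STrue {AP}. Arguments SAtom {AP} _. Arguments SNot {AP} _.
Arguments SAnd {AP} _ _. Arguments SE {AP} _. Arguments SD {AP} _ _.
Arguments PState {AP} _. Arguments PNot {AP} _. Arguments PAnd {AP} _ _.
Arguments PX {AP} _. Arguments PU {AP} _ _.

Fixpoint wf_s {AP} (f : sform AP) : Prop :=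
  match f with
  | STrue | SAtom _ => True
  | SNot g => wf_s g
  | SAnd g h => wf_s g /\ wf_s h
  | SE p => wf_p p
  | SD k g => 1 <= k /\ wf_s g
  end
with wf_p {AP} (p : pform AP) : Prop :=
  match p with
  | PState f => wf_s f
  | PNot q => wf_p q
  | PAnd q r => wf_p q /\ wf_p r
  | PX q => wf_p q
  | PU q r => wf_p q /\ wf_p r
  end.

Fixpoint sat_s {D AP} (T : ktree D AP) (w : list D) (f : sform AP) : Prop :=
  match f with
  | STrue => True
  | SAtom a => lab T w a
  | SNot g => ~ sat_s T w g
  | SAnd g h => sat_s T w g /\ sat_s T w h
  | SE p => exists pi, is_path T w pi /\ sat_p T pi 0 p
  | SD k g => exists ds : list D, NoDup ds /\ k <= length ds /\
               forall d, In d ds -> node T (w ++ [d]) /\ sat_s T (w ++ [d]) g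
  end
with sat_p {D AP} (T : ktree D AP) (pi : nat -> list D) (i : nat) (p : pform AP) : Prop :=
  match p with
  | PState f => sat_s T (pi i) f
  | PNot q => ~ sat_p T pi i q
  | PAnd q r => sat_p T pi i q /\ sat_p T pi i r
  | PX q => sat_p T pi (S i) q
  | PU q r => exists j, i <= j /\ sat_p T pi j r /\
                forall l, i <= l < j -> sat_p T pi l q
  end.

Definition in_lang {D AP} (f : sform AP) (T : ktree D AP) : Prop := sat_s T [] f.

(* AP = {p}: represented by the one-element type unit, p := tt. *)
Definition L2 {D} (T : ktree D unit) : Prop :=
  exists pi, is_path T [] pi /\
    (forall n, ~ lab T (pi n) tt) /\
    (forall i, exists d, node T (pi (2 * i) ++ [d]) /\ lab T (pi (2 * i) ++ [d]) tt).

(* Main.v *)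
Require Import Defs.
From Stdlib Require Import List Arith Lia Classical.
Import ListNotations.

Definition shiftO (o : option nat) : option nat :=
  match o with Some (S m) => Some m | _ => None end.
Fixpoint shiftn (j : nat) (o : option nat) : option nat :=
  match j with 0 => o | S j' => shiftn j' (shiftO o) end.

Fixpoint validO (o : option nat) (w : list bool) : Prop :=
  match w with
  | [] => True
  | false :: w' => validO (shiftO o) w'
  | true :: w' => o <> Some 0 /\ Forall (fun b => b = true) w'
  end.

Lemma validO_prefix : forall u v o, validO o (u ++ v) -> validO o u.
Proof.
  induction u as [|a u IH]; intros v o H; simpl in *; auto.
  destruct a.
  - destruct H as [H1 H2]. split; auto. apply Forall_app in H2. tauto.
  - eapply IH; eauto.
Qed.

Lemma validO_nb : forall w o, validO o w -> exists d, validO o (w ++ [d]).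
Proof.
  induction w as [|a w IH]; intros o H; simpl in *.
  - exists false. simpl. auto.
  - destruct a.
    + exists true. destruct H as [H1 H2]. split; auto. apply Forall_app. split; auto.
    + apply IH; auto.
Qed.

Definition T (o : option nat) : ktree bool unit :=
  KTree bool unit (validO o) (fun w _ => In true w) I
    (fun u v H => validO_prefix u v o H) (fun w H => validO_nb w o H).

Lemma Pc_prefix : forall (u v : list bool), Forall (fun b => b = true) (u ++ v) -> Forall (fun b => b = true) u.
Proof. intros u v H. apply Forall_app in H. tauto. Qed.
Lemma Pc_nb : forall (w : list bool), Forall (fun b => b = true) w -> exists d, Forall (fun b => b = true) (w ++ [d]).
Proof. intros w H. exists true. apply Forall_app. split; auto. Qed.

Definition Pc : ktree bool unit :=
  KTree bool unit (fun w => Forall (fun b => b = true) w) (fun _ _ => True) (Forall_nil _) Pc_prefix Pc_nb.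

Scheme sform_ind' := Induction for sform Sort Prop
with pform_ind' := Induction for pform Sort Prop.
Combined Scheme form_ind from sform_ind', pform_ind'.

Lemma skipn_pre {A} (w s : list A) : skipn (length w) (w ++ s) = s.
Proof. induction w; simpl; auto. Qed.

Lemma subtree {D AP} (T1 T2 : ktree D AP) (w : list D)
  (Hn : forall u, node T1 (w ++ u) <-> node T2 u)
  (Hl : forall u a, lab T1 (w ++ u) a <-> lab T2 u a) :
  (forall f u, sat_s T1 (w ++ u) f <-> sat_s T2 u f) /\
  (forall p pi pi' i, (forall j, pi j = w ++ pi' j) -> (sat_p T1 pi i p <-> sat_p T2 pi' i p)).
Proof.
  apply (form_ind AP (fun f => forall u, sat_s T1 (w ++ u) f <-> sat_s T2 u f)
                   (fun p => forall pi pi' i, (forall j, pi j = w ++ pi' j) -> (sat_p T1 pi i p <-> sat_p T2 pi' i p))).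
  - simpl; tauto.
  - intros a u; simpl; apply Hl.
  - intros g IH u; simpl; rewrite IH; tauto.
  - intros g IHg h IHh u; simpl; rewrite IHg, IHh; tauto.
  - intros p IH u; simpl; split.
    + intros [pi [[H0 Hs] Hp]].
      assert (Hpre : forall j, exists s, pi j = w ++ s).
      { induction j. exists u; auto. destruct IHj as [s Hs'].
        destruct (Hs j) as [_ [d Hd]]. exists (s ++ [d]). rewrite Hd, Hs', app_assoc; auto. }
      assert (Hpi : forall j, pi j = w ++ skipn (length w) (pi j)).
      { intros j. destruct (Hpre j) as [s Hs']. rewrite Hs', skipn_pre. auto. }
      exists (fun j => skipn (length w) (pi j)). split.
      * split.
        -- rewrite H0, skipn_pre. auto.
        -- intros k. destruct (Hs k) as [Hnk [d Hd]]. split.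
           ++ apply Hn. rewrite <- Hpi. auto.
           ++ exists d. apply (app_inv_head w). rewrite app_assoc, <- !Hpi. auto.
      * apply (IH pi); auto.
    + intros [pi' [[H0 Hs] Hp]]. exists (fun j => w ++ pi' j). split.
      * split.
        -- rewrite H0; auto.
        -- intros k. destruct (Hs k) as [Hnk [d Hd]]. split.
           ++ apply Hn; auto.
           ++ exists d. rewrite Hd, app_assoc; auto.
      * apply (IH _ pi'); auto.
  - intros k g IH u; simpl; split; intros [ds [Hnd [Hk Hall]]]; exists ds; split; auto; split; auto;
      intros d Hd; destruct (Hall d Hd) as [Hn' Hs'].
    + rewrite <- app_assoc in Hn', Hs'. split; [apply Hn; auto | apply IH; auto].
    + rewrite <- app_assoc. split; [apply Hn; auto | apply IH; auto].
  - intros f IH pi pi' i Hpi; simpl; rewrite Hpi; apply IH.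
  - intros q IH pi pi' i Hpi; simpl; rewrite (IH pi pi' i Hpi); tauto.
  - intros q IHq r IHr pi pi' i Hpi; simpl; rewrite (IHq pi pi' i Hpi), (IHr pi pi' i Hpi); tauto.
  - intros q IH pi pi' i Hpi; simpl; apply IH; auto.
  - intros q IHq r IHr pi pi' i Hpi; simpl; split; intros [j [Hj [H2 H1]]]; exists j; split; auto; split.
    + apply (IHr pi pi'); auto.
    + intros l Hll. apply (IHq pi pi'); auto.
    + apply (IHr pi pi'); auto.
    + intros l Hll. apply (IHq pi pi'); auto.
Qed.
Fixpoint ltl (w : nat -> sform unit -> Prop) (i : nat) (p : pform unit) : Prop :=
  match p with
  | PState f => w i f
  | PNot q => ~ ltl w i q
  | PAnd q r => ltl w i q /\ ltl w i r
  | PX q => ltl w (S i) q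
  | PU q r => exists j, i <= j /\ ltl w j r /\ forall l, i <= l < j -> ltl w l q
  end.

Lemma sat_ltl : forall p {D} (T0 : ktree D unit) pi i,
  sat_p T0 pi i p <-> ltl (fun j f => sat_s T0 (pi j) f) i p.
Proof.
  induction p; intros D T0 pi i; simpl.
  - tauto.
  - rewrite IHp; tauto.
  - rewrite IHp1, IHp2; tauto.
  - apply IHp.
  - split; intros [j [Hj [H2 H1]]]; exists j; split; auto; split.
    + apply IHp2; auto.
    + intros l Hll; apply IHp1; auto.
    + apply IHp2; auto.
    + intros l Hll; apply IHp1; auto.
Qed.

Fixpoint patoms (p : pform unit) : list (sform unit) :=
  match p with
  | PState f => [f] | PNot q => patoms q | PAnd q r => patoms q ++ patoms r
  | PX q => patoms q | PU q r => patoms q ++ patoms r end.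

Fixpoint xd (p : pform unit) : nat :=
  match p with
  | PState _ => 1 | PNot q => xd q | PAnd q r => max (xd q) (xd r)
  | PX q => S (xd q) | PU q r => max (xd q) (xd r) end.

Lemma xd_pos : forall p, 1 <= xd p.
Proof. induction p; simpl; lia. Qed.

Definition eqon (l : list (sform unit)) (a b : sform unit -> Prop) :=
  forall f, In f l -> (a f <-> b f).

Lemma eqon_l l1 l2 a b : eqon (l1 ++ l2) a b -> eqon l1 a b.
Proof. intros H f Hf; apply H, in_or_app; auto. Qed.
Lemma eqon_r l1 l2 a b : eqon (l1 ++ l2) a b -> eqon l2 a b.
Proof. intros H f Hf; apply H, in_or_app; auto. Qed.
Lemma eqon_sym l a b : eqon l a b -> eqon l b a.
Proof. intros H f Hf; rewrite (H f Hf); tauto. Qed.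
Lemma eqon_trans l a b c : eqon l a b -> eqon l b c -> eqon l a c.
Proof. intros H1 H2 f Hf; rewrite (H1 f Hf); auto. Qed.

Lemma ltl_pw : forall p w w', (forall j, eqon (patoms p) (w j) (w' j)) ->
  forall i, ltl w i p <-> ltl w' i p.
Proof.
  induction p; intros w w' H i; simpl in *.
  - apply H; simpl; auto.
  - rewrite (IHp w w' H); tauto.
  - rewrite (IHp1 w w'), (IHp2 w w'); [tauto| |]; intros j; [eapply eqon_r|eapply eqon_l]; eauto.
  - apply IHp; auto.
  - assert (H1 : forall j, eqon (patoms p1) (w j) (w' j)) by (intros j; eapply eqon_l; eauto).
    assert (H2 : forall j, eqon (patoms p2) (w j) (w' j)) by (intros j; eapply eqon_r; eauto).
    split; intros [j [Hj [Hr Hq]]]; exists j; split; auto; split.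
    + apply (IHp2 w w'); auto.
    + intros l Hll; apply (IHp1 w w'); auto.
    + apply (IHp2 w w'); auto.
    + intros l Hll; apply (IHp1 w w'); auto.
Qed.

Lemma ltl_shift : forall p q w w', (forall j, q <= j -> eqon (patoms p) (w' (S j)) (w j)) ->
  forall j, q <= j -> (ltl w j p <-> ltl w' (S j) p).
Proof.
  induction p; intros q w w' H j Hj; simpl in *.
  - symmetry; apply H; simpl; auto.
  - rewrite (IHp q w w' H j Hj); tauto.
  - rewrite (IHp1 q w w'), (IHp2 q w w'); auto; [tauto| |]; intros k Hk; [eapply eqon_r|eapply eqon_l]; eauto.
  - apply (IHp q); auto.
  - assert (H1 : forall k, q <= k -> eqon (patoms p1) (w' (S k)) (w k)) by (intros k Hk; eapply eqon_l; eauto).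
    assert (H2 : forall k, q <= k -> eqon (patoms p2) (w' (S k)) (w k)) by (intros k Hk; eapply eqon_r; eauto).
    split.
    + intros [k [Hk [Hr Hq]]]. exists (S k). split; [lia|]. split.
      * apply (IHp2 q w w'); auto; lia.
      * intros l Hll. destruct l as [|l]; [lia|]. apply (IHp1 q w w'); auto; try lia. apply Hq; lia.
    + intros [k [Hk [Hr Hq]]]. destruct k as [|k]; [lia|]. exists k. split; [lia|]. split.
      * apply (IHp2 q w w'); auto; lia.
      * intros l Hll. apply (IHp1 q w w'); auto; try lia. apply Hq; lia.
Qed.

Lemma ltl_ins : forall p q w w' c,
  (forall j, j < q -> eqon (patoms p) (w' j) (w j)) ->
  eqon (patoms p) (w' q) c ->
  (forall j, q <= j -> eqon (patoms p) (w' (S j)) (w j)) ->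
  (forall j, q <= j < q + xd p -> eqon (patoms p) (w j) c) ->
  forall i, i <= q -> (ltl w i p <-> ltl w' i p).
Proof.
  induction p; intros q w w' c Hpre Hq Hsuf Hblk i Hi; simpl in *.
  - destruct (Nat.eq_dec i q) as [->|Hne].
    + assert (Hb := Hblk q ltac:(lia)). specialize (Hb _ (or_introl eq_refl)). specialize (Hq _ (or_introl eq_refl)). tauto.
    + symmetry; apply Hpre; simpl; auto; lia.
  - rewrite (IHp q w w' c Hpre Hq Hsuf Hblk i Hi); tauto.
  - rewrite (IHp1 q w w' c), (IHp2 q w w' c); auto; try tauto.
    all: try (intros j Hj; eapply eqon_r; eauto; apply Hblk; lia).
    all: try (intros j Hj; eapply eqon_l; eauto; apply Hblk; lia).
    all: try (intros j Hj; eapply eqon_r; eauto).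
    all: try (intros j Hj; eapply eqon_l; eauto).
    all: try (eapply eqon_r; eauto).
    all: try (eapply eqon_l; eauto).
  - destruct (Nat.eq_dec i q) as [->|Hne].
    + apply (IHp (S q) w w' c); auto.
      * intros j Hj. destruct (Nat.eq_dec j q) as [->|Hne].
        -- eapply eqon_trans; [exact Hq|]. apply eqon_sym, Hblk; lia.
        -- apply Hpre; lia.
      * eapply eqon_trans; [apply Hsuf; lia|]. apply Hblk; lia.
      * intros j Hj; apply Hsuf; lia.
      * intros j Hj; apply Hblk; lia.
    + apply (IHp q w w' c); auto; try lia. intros j Hj; apply Hblk; lia.
  - assert (P1 : forall i, i <= q -> (ltl w i p1 <-> ltl w' i p1)).
    { intros i0 Hi0. apply (IHp1 q w w' c); auto.
      - intros j Hj; eapply eqon_l; eauto.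
      - eapply eqon_l; eauto.
      - intros j Hj; eapply eqon_l; eauto.
      - intros j Hj; eapply eqon_l; eauto. apply Hblk; lia. }
    assert (P2 : forall i, i <= q -> (ltl w i p2 <-> ltl w' i p2)).
    { intros i0 Hi0. apply (IHp2 q w w' c); auto.
      - intros j Hj; eapply eqon_r; eauto.
      - eapply eqon_r; eauto.
      - intros j Hj; eapply eqon_r; eauto.
      - intros j Hj; eapply eqon_r; eauto. apply Hblk; lia. }
    assert (S1 : forall j, q <= j -> (ltl w j p1 <-> ltl w' (S j) p1)).
    { apply ltl_shift. intros j Hj; eapply eqon_l; eauto. }
    assert (S2 : forall j, q <= j -> (ltl w j p2 <-> ltl w' (S j) p2)).
    { apply ltl_shift. intros j Hj; eapply eqon_r; eauto. }
    split.
    + intros [j [Hj [Hr Hlq]]].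
      destruct (le_lt_dec j q) as [Hjq|Hjq].
      * exists j. split; auto. split; [apply P2; auto|]. intros l Hll. apply P1; [lia|]. apply Hlq; lia.
      * exists (S j). split; [lia|]. split; [apply S2; auto; lia|].
        intros l Hll. destruct (le_lt_dec l q) as [Hlq2|Hlq2].
        -- apply P1; auto. apply Hlq; lia.
        -- destruct l as [|l]; [lia|]. apply S1; [lia|]. apply Hlq; lia.
    + intros [j [Hj [Hr Hlq]]].
      destruct (le_lt_dec j q) as [Hjq|Hjq].
      * exists j. split; auto. split; [apply P2; auto|]. intros l Hll. apply P1; [lia|]. apply Hlq; lia.
      * destruct j as [|j]; [lia|]. exists j. split; [lia|]. split; [apply S2; auto; lia|].
        intros l Hll. destruct (le_lt_dec q l) as [Hlq2|Hlq2].
        -- apply S1; auto. apply Hlq; lia.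
        -- apply P1; [lia|]. apply Hlq; lia.
Qed.
Definition V (o : option nat) (f : sform unit) : Prop := sat_s (T o) [] f.
Definition VP (f : sform unit) : Prop := sat_s Pc [] f.
Definition spw (o : option nat) (j : nat) (f : sform unit) : Prop := V (shiftn j o) f.
Definition brw (o : option nat) (b j : nat) (f : sform unit) : Prop :=
  if j <=? b then V (shiftn j o) f else VP f.

Lemma node_Trep : forall j o u, validO o (repeat false j ++ u) <-> validO (shiftn j o) u.
Proof. induction j; intros o u; simpl; [tauto| apply IHj]. Qed.

Lemma valid_rep : forall j o, validO o (repeat false j).
Proof. induction j; intros o; simpl; auto. Qed.

Lemma in_rep_false : forall j u, In true (repeat false j ++ u) <-> In true u.
Proof.
  intros j u; rewrite in_app_iff; split; [intros [H|H]; auto|auto].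
  apply repeat_spec in H; discriminate.
Qed.

Lemma rep_snoc {A} (x : A) n : repeat x (S n) = repeat x n ++ [x].
Proof. induction n; simpl; auto. simpl in IHn; rewrite IHn; auto. Qed.

Lemma nofalse : forall u : list bool, ~ In true u -> u = repeat false (length u).
Proof.
  induction u as [|a u IH]; intros H; simpl; auto.
  destruct a; simpl in H. exfalso; auto. f_equal; apply IH; auto.
Qed.

Lemma split_true : forall u : list bool, In true u -> exists b u', u = repeat false b ++ true :: u'.
Proof.
  induction u as [|a u IH]; intros H; simpl in H; [contradiction|].
  destruct a. exists 0, u; auto.
  destruct H as [H|H]; [discriminate|]. destruct (IH H) as [b [u' E]]. exists (S b), u'. rewrite E; auto.
Qed.

Lemma L1 : forall o u f, ~ In true u -> (sat_s (T o) u f <-> V (shiftn (length u) o) f).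
Proof.
  intros o u f H. rewrite (nofalse u H) at 1.
  destruct (subtree (T o) (T (shiftn (length u) o)) (repeat false (length u))) as [Hs _].
  - intros v; simpl; apply node_Trep.
  - intros v a; simpl; apply in_rep_false.
  - specialize (Hs f []). rewrite app_nil_r in Hs. exact Hs.
Qed.

Lemma Pc_rep : forall u f, Forall (fun b => b = true) u -> (sat_s Pc u f <-> VP f).
Proof.
  intros u f H.
  destruct (subtree Pc Pc u) as [Hs _].
  - intros v; simpl. rewrite Forall_app. tauto.
  - intros v a; simpl; tauto.
  - specialize (Hs f []). rewrite app_nil_r in Hs. exact Hs.
Qed.

Lemma L2' : forall o u f, validO o u -> In true u -> (sat_s (T o) u f <-> VP f).
Proof.
  intros o u f Hv Hin. destruct (split_true u Hin) as [b [u' E]]. subst u.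
  pose proof Hv as Hv'. apply node_Trep in Hv'. simpl in Hv'. destruct Hv' as [Hb Hu'].
  destruct (subtree (T o) Pc (repeat false b ++ true :: u')) as [Hs _].
  - intros v; simpl. rewrite <- app_assoc. simpl. rewrite node_Trep. simpl. rewrite Forall_app. tauto.
  - intros v a; simpl. rewrite <- app_assoc, in_rep_false. simpl; tauto.
  - specialize (Hs f []). rewrite app_nil_r in Hs. exact Hs.
Qed.

Lemma path_len {D AP} (T0 : ktree D AP) pi : is_path T0 [] pi -> forall j, length (pi j) = j.
Proof.
  intros [H0 Hs] j. induction j. rewrite H0; reflexivity.
  destruct (Hs j) as [_ [d Hd]]. rewrite Hd, length_app, IHj. simpl. lia.
Qed.

Lemma path_valid {D AP} (T0 : ktree D AP) pi : is_path T0 [] pi -> forall j, node T0 (pi j).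
Proof.
  intros [H0 Hs] j. destruct j. rewrite H0; apply node_root. apply Hs.
Qed.

Lemma path_mono {D AP} (T0 : ktree D AP) pi x : is_path T0 [] pi -> forall j k, j <= k -> In x (pi j) -> In x (pi k).
Proof.
  intros [H0 Hs] j k Hjk. induction Hjk; auto. intros H.
  destruct (Hs m) as [_ [d Hd]]. rewrite Hd. apply in_or_app; auto.
Qed.

Lemma trans_pt (Q : nat -> Prop) : ~ Q 0 -> forall n, Q n -> exists b, ~ Q b /\ Q (S b).
Proof.
  intros H0 n. induction n; intros H; [contradiction|].
  destruct (classic (Q n)); [apply IHn; auto| exists n; auto].
Qed.

Lemma eqon_all l (a b : sform unit -> Prop) : (forall f, a f <-> b f) -> eqon l a b.
Proof. intros H f _; apply H. Qed.

Definition bp (b j : nat) : list bool :=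
  if j <=? b then repeat false j else repeat false b ++ true :: repeat true (j - S b).

Lemma SE_char : forall o p, sat_s (T o) [] (SE p) <->
  ltl (spw o) 0 p \/ exists b, shiftn b o <> Some 0 /\ ltl (brw o b) 0 p.
Proof.
  intros o p; simpl; split.
  - intros [pi [Hp Hs]]. rewrite sat_ltl in Hs.
    pose proof (path_len _ _ Hp) as Hlen. pose proof (path_valid _ _ Hp) as Hval.
    destruct (classic (exists j, In true (pi j))) as [[j0 Hj0]|Hno].
    + assert (Hnz : ~ In true (pi 0)) by (destruct Hp as [H0 _]; rewrite H0; simpl; auto).
      destruct (trans_pt (fun j => In true (pi j)) Hnz j0 Hj0) as [b [Hb1 Hb2]].
      right. exists b.
      assert (Hpb : pi b = repeat false b) by (rewrite (nofalse _ Hb1), Hlen; auto).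
      destruct Hp as [H0 Hs'] eqn:Hpe. destruct (Hs' b) as [Hn [d Hd]].
      assert (d = true).
      { rewrite Hd, in_app_iff in Hb2. destruct Hb2 as [H|H]; [contradiction|]. simpl in H. destruct H; auto; contradiction. }
      subst d. split.
      * rewrite Hd, Hpb in Hn. simpl in Hn. apply node_Trep in Hn. simpl in Hn. tauto.
      * revert Hs. apply ltl_pw. intros j. apply eqon_all. intros f. unfold brw.
        destruct (j <=? b) eqn:E.
        -- apply Nat.leb_le in E. rewrite L1, Hlen; [tauto|].
           intros Hin. apply Hb1. apply (path_mono _ _ _ Hp j b); auto.
        -- apply Nat.leb_gt in E. symmetry; apply L2'; [apply Hval|]. apply (path_mono _ _ _ Hp (S b) j); auto.
    + left. revert Hs. apply ltl_pw. intros j. apply eqon_all. intros f. unfold spw.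
      rewrite L1, Hlen; [tauto|]. intros Hin; apply Hno; eauto.
  - intros [Hs | [b [Hb Hs]]].
    + exists (fun j => repeat false j). split.
      * split; auto. intros k. split; [apply valid_rep|]. exists false. apply rep_snoc.
      * rewrite sat_ltl. revert Hs. apply ltl_pw. intros j. apply eqon_all. intros f. unfold spw.
        rewrite L1, repeat_length; [tauto|]. rewrite <- (app_nil_r (repeat false j)), in_rep_false. simpl; auto.
    + assert (Hv : forall j, validO o (bp b j)).
      { intros j. unfold bp. destruct (j <=? b). apply valid_rep. apply node_Trep. simpl. split; auto.
        apply Forall_forall. intros x Hx. apply repeat_spec in Hx; auto. }
      exists (bp b). split.
      * split; [reflexivity|]. intros k. split; [apply Hv|].
        unfold bp. destruct (S k <=? b) eqn:E1.
        -- apply Nat.leb_le in E1. assert (E2 : (k <=? b) = true) by (apply Nat.leb_le; lia).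
           rewrite E2. exists false. apply rep_snoc.
        -- apply Nat.leb_gt in E1. exists true. destruct (k <=? b) eqn:E2.
           ++ apply Nat.leb_le in E2. assert (k = b) by lia. subst k. rewrite Nat.sub_diag. reflexivity.
           ++ apply Nat.leb_gt in E2. replace (S k - S b) with (S (k - S b)) by lia.
              rewrite rep_snoc, <- app_assoc. reflexivity.
      * rewrite sat_ltl. revert Hs. apply ltl_pw. intros j. apply eqon_all. intros f. unfold brw, bp.
        destruct (j <=? b) eqn:E.
        -- rewrite L1, repeat_length; [tauto|]. rewrite <- (app_nil_r (repeat false j)), in_rep_false. simpl; auto.
        -- rewrite L2'; [tauto| |].
           ++ pose proof (Hv j) as Hvj. unfold bp in Hvj. rewrite E in Hvj. exact Hvj.
           ++ rewrite in_rep_false. simpl; auto.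
Qed.
Lemma some_ne : forall a, a <> 0 -> Some a <> Some 0.
Proof. intros a H E. apply H. congruence. Qed.

Lemma shiftn_none : forall j, shiftn j None = None.
Proof. induction j; simpl; auto. Qed.

Lemma shiftn_some : forall j m, j <= m -> shiftn j (Some m) = Some (m - j).
Proof.
  induction j; intros m H; simpl. f_equal; lia.
  destruct m; [lia|]. simpl. rewrite IHj; [f_equal; lia| lia].
Qed.

Lemma shiftn_big : forall j m, m < j -> shiftn j (Some m) = None.
Proof.
  induction j; intros m H; [lia|]. simpl. destruct m. apply shiftn_none.
  apply IHj; lia.
Qed.

Definition Sc (f : sform unit) := exists N, forall m, N <= m -> (V (Some m) f <-> V (Some (S m)) f).

Lemma Sc_const (g : nat -> Prop) N : (forall m, N <= m -> (g m <-> g (S m))) ->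
  forall a, N <= a -> (g a <-> g N).
Proof.
  intros H a. induction a; intros Ha.
  - assert (N = 0) by lia; subst; tauto.
  - destruct (Nat.eq_dec N (S a)) as [->|Hne]; [tauto|].
    rewrite <- H by lia. apply IHa; lia.
Qed.

Lemma Sc_list : forall l, (forall f, In f l -> Sc f) ->
  exists N, forall f, In f l -> forall a b, N <= a -> N <= b -> (V (Some a) f <-> V (Some b) f).
Proof.
  induction l as [|f l IH]; intros H.
  - exists 0; intros f Hf; contradiction.
  - destruct (H f (or_introl eq_refl)) as [N1 H1].
    destruct IH as [N2 H2]; [intros g Hg; apply H; simpl; auto|].
    exists (max N1 N2). intros g [<-|Hg] a b Ha Hb.
    + rewrite (Sc_const (fun m => V (Some m) f) N1 H1 a), (Sc_const (fun m => V (Some m) f) N1 H1 b); try lia; tauto.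
    + apply H2; auto; lia.
Qed.

Theorem mainS : (forall f : sform unit, Sc f) /\ (forall p : pform unit, forall f, In f (patoms p) -> Sc f).
Proof.
  apply (form_ind unit Sc (fun p => forall f, In f (patoms p) -> Sc f)).
  - exists 0; intros; unfold V; simpl; tauto.
  - intros a; exists 0; intros; unfold V; simpl; tauto.
  - intros g [N H]; exists N; intros m Hm; specialize (H m Hm); unfold V in *; simpl; tauto.
  - intros g [N1 H1] h [N2 H2]; exists (max N1 N2); intros m Hm.
    specialize (H1 m ltac:(lia)); specialize (H2 m ltac:(lia)); unfold V in *; simpl; tauto.
  - intros p IH. destruct (Sc_list _ IH) as [N0 Hc].
    pose proof (xd_pos p) as Hx.
    exists (N0 + xd p + 1). intros m Hm. unfold V. rewrite !SE_char.
    assert (Lsp : ltl (spw (Some m)) 0 p <-> ltl (spw (Some (S m))) 0 p).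
    { apply (ltl_ins p 0 (spw (Some m)) (spw (Some (S m))) (spw (Some m) 0)); try lia.
      - intros f Hf. unfold spw; simpl. apply Hc; auto; lia.
      - intros j _ f Hf. unfold spw; simpl. tauto.
      - intros j Hj f Hf. unfold spw; simpl. rewrite shiftn_some by lia. apply Hc; auto; lia. }
    assert (Lsmall : forall b, b <= xd p -> (ltl (brw (Some m) b) 0 p <-> ltl (brw (Some (S m)) b) 0 p)).
    { intros b Hb. apply ltl_pw. intros j f Hf. unfold brw. destruct (j <=? b) eqn:E; [|tauto].
      apply Nat.leb_le in E. rewrite !shiftn_some by lia. apply Hc; auto; lia. }
    assert (Lbig : forall b, xd p <= b -> (ltl (brw (Some m) b) 0 p <-> ltl (brw (Some (S m)) (S b)) 0 p)).
    { intros b Hb. apply (ltl_ins p 0 (brw (Some m) b) (brw (Some (S m)) (S b)) (brw (Some m) b 0)); try lia.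
      - intros f Hf. unfold brw; simpl. apply Hc; auto; lia.
      - intros j _ f Hf. unfold brw; simpl. tauto.
      - intros j Hj f Hf. unfold brw; simpl.
        assert (E : (j <=? b) = true) by (apply Nat.leb_le; lia). rewrite E.
        rewrite shiftn_some by lia. apply Hc; auto; lia. }
    split; intros [Hs | [b [Hb Hl]]].
    + left; apply Lsp; auto.
    + right. destruct (le_lt_dec b (xd p)) as [Hbx|Hbx].
      * exists b. split; [rewrite shiftn_some by lia; intros E; assert (S m - b = 0) by congruence; lia|]. apply Lsmall; auto.
      * exists (S b). split; [exact Hb|]. apply Lbig; auto; lia.
    + left; apply Lsp; auto.
    + right. destruct (le_lt_dec b (xd p)) as [Hbx|Hbx].
      * exists b. split; [rewrite shiftn_some by lia; intros E; assert (m - b = 0) by congruence; lia|]. apply Lsmall; auto.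
      * destruct b as [|b]; [lia|]. exists b. split; [exact Hb|]. apply Lbig; auto; lia.
  - intros k g [N H]. exists (S N). intros m Hm. unfold V; simpl.
    destruct m as [|m]; [lia|].
    assert (Hch : forall d, (validO (Some (S m)) [d] /\ sat_s (T (Some (S m))) [d] g) <->
                            (validO (Some (S (S m))) [d] /\ sat_s (T (Some (S (S m)))) [d] g)).
    { intros d. destruct d.
      - simpl. rewrite !L2'; simpl; auto; try (split; auto; discriminate).
        split; intros [_ Hh]; (split; [split; [discriminate|auto]|auto]).
      - rewrite !L1 by (simpl; intros [Hf|[]]; discriminate). simpl. specialize (H m ltac:(lia)). unfold V in H. tauto. }
    split; intros [ds [Hnd [Hk Hall]]]; exists ds; split; auto; split; auto;
      intros d Hd; apply Hch; apply Hall; auto.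
  - intros f IH f' [<-|[]]; auto.
  - intros q IH; exact IH.
  - intros q IHq r IHr f Hf; simpl in Hf; apply in_app_iff in Hf; destruct Hf; auto.
  - intros q IH; exact IH.
  - intros q IHq r IHr f Hf; simpl in Hf; apply in_app_iff in Hf; destruct Hf; auto.
Qed.

Lemma notL2 : forall n, ~ L2 (T (Some (2 * n))).
Proof.
  intros n [pi [Hp [Hnp Hc]]].
  assert (Hsp : forall j, pi j = repeat false j).
  { intros j. rewrite (nofalse (pi j)), (path_len _ _ Hp); auto. apply Hnp. }
  destruct (Hc n) as [d [Hn Hl]]. rewrite Hsp in Hn, Hl. simpl in Hn, Hl.
  apply in_app_iff in Hl. destruct Hl as [Hl|Hl].
  - apply repeat_spec in Hl; discriminate.
  - destruct Hl as [->|[]]. apply node_Trep in Hn. simpl in Hn.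
    rewrite shiftn_some in Hn by lia. destruct Hn as [Hn _]. apply Hn. f_equal; lia.
Qed.

Lemma isL2 : forall n, L2 (T (Some (S (2 * n)))).
Proof.
  intros n. exists (fun j => repeat false j). split; [|split].
  - split; auto. intros k. split; [apply valid_rep|]. exists false. apply rep_snoc.
  - intros j Hj. simpl in Hj. rewrite <- (app_nil_r (repeat false j)), in_rep_false in Hj. auto.
  - intros i. exists true. split.
    + simpl. apply node_Trep. simpl. split; auto.
      destruct (le_lt_dec (2 * i) (S (2 * n))).
      * rewrite shiftn_some by lia. apply some_ne. lia.
      * rewrite shiftn_big by lia. discriminate.
    + simpl. rewrite in_rep_false. simpl; auto.
Qed.

Theorem corollary24 :
  ~ exists phi : sform unit, wf_s phi /\
      forall (D : Type) (T : ktree D unit), in_lang phi T <-> L2 T.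
Proof.
  intros [phi [_ H]].
  destruct (proj1 mainS phi) as [N HN].
  specialize (HN (2 * N) ltac:(lia)).
  pose proof (H bool (T (Some (2 * N)))) as H1.
  pose proof (H bool (T (Some (S (2 * N))))) as H2.
  unfold in_lang, V in *.
  apply (notL2 N). apply H1. apply HN. apply H2. apply isL2.
Qed.
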